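(* Let $\Bbbk$ be a field and $G$ a finite abelian group, written as $G=G_1\oplus\cdots\oplus G_p$ with each $G_i$ a finite cyclic group. Then $\operatorname{Frobdim}(\Bbbk G)=\prod_{i=1}^p|G_i|$.
   Context: $\Bbbk G$ is the group algebra. A nearly Frobenius coproduct on a $\Bbbk$-algebra $A$ is a $\Bbbk$-linear map $\Delta:A\to A\otimes_\Bbbk A$ that is an $A$-bimodule morphism, i.e. $\Delta(ab)=(a\otimes 1)\Delta(b)=\Delta(a)(1\otimes b)$ for all $a,b\in A$. The Frobenius space of $A$ is the vector space of all such coproducts, and $\operatorname{Frobdim}A$ is its dimension over $\Bbbk$. *)

(* Defs.v *)
From HB Require Import structures.
From mathcomp Require Import all_boot all_order all_algebra all_fingroup all_solvable.
Set Implicit Arguments. Unset Strict Implicit. Unset Printing Implicit Defensive.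
Import GRing.Theory.
Local Open Scope ring_scope.

(* The group algebra kG of a finite group (type) gT over a field k is modelled
   as the k-vector space of functions gT -> k (coefficients on the basis g),
   with the convolution product.  kG (x) kG is modelled as k[G x G], i.e.
   functions gT * gT -> k, via (a (x) b)(g,h) = a g * b h. *)

Section GroupAlgebra.
Variables (k : fieldType) (gT : finGroupType).

Definition gAlg := {ffun gT -> k^o}.
Definition gAlg2 := {ffun (gT * gT) -> k^o}.

Definition gbasis (g : gT) : gAlg := [ffun x => (x == g)%:R].

Definition gmul (a b : gAlg) : gAlg :=
  [ffun g => \sum_(h : gT) a h * b ((h^-1 * g)%g)].

Definition gone : gAlg := gbasis 1%g.

(* (a (x) 1) * t  in kG (x) kG *)
Definition lact (a : gAlg) (t : gAlg2) : gAlg2 :=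
  [ffun gh : gT * gT => \sum_(x : gT) a x * t ((x^-1 * gh.1)%g, gh.2)].

(* t * (1 (x) b)  in kG (x) kG *)
Definition ract (t : gAlg2) (b : gAlg) : gAlg2 :=
  [ffun gh : gT * gT => \sum_(y : gT) t (gh.1, y) * b ((y^-1 * gh.2)%g)].

Definition nearly_frobenius (D : 'Hom(gAlg, gAlg2)) : Prop :=
  forall a b : gAlg, D (gmul a b) = lact a (D b) /\ D (gmul a b) = ract (D a) b.

Definition Frobdim_is (n : nat) : Prop :=
  exists V : {vspace 'Hom(gAlg, gAlg2)},
    (forall D, D \in V <-> nearly_frobenius D) /\ \dim V = n.

End GroupAlgebra.

(* Main.v *)
Require Import Defs.
From HB Require Import structures.
From mathcomp Require Import all_boot all_order all_algebra all_fingroup all_solvable.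
Import GRing.Theory.
Local Open Scope ring_scope.

Section S.
Variables (k : fieldType) (gT : finGroupType).
Local Notation A := (gAlg k gT).
Local Notation A2 := (gAlg2 k gT).

Definition Df (f : A) (a : A) : A2 :=
  [ffun xy : gT * gT => \sum_(z : gT) a z * f ((xy.2 * z^-1 * xy.1)%g)].

Lemma Df_lin f : linear (Df f).
Proof.
move=> c a b; apply/ffunP=> xy; rewrite !ffunE scaler_sumr -big_split /=.
by apply: eq_bigr => z _; rewrite !ffunE mulrDl scalerAl.
Qed.
HB.instance Definition _ f := GRing.isLinear.Build k A A2 *:%R (Df f) (Df_lin f).

Definition Phi (f : A) : 'Hom(A, A2) := linfun (Df f).

Lemma Phi_lin : linear Phi.
Proof.
move=> c f g; apply/lfunP=> a; rewrite !lfunE /= !lfunE /= !lfunE /=.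
apply/ffunP=> xy; rewrite !ffunE scaler_sumr -big_split /=.
by apply: eq_bigr => z _; rewrite !ffunE mulrDr -scalerAr.
Qed.
HB.instance Definition _ := GRing.isLinear.Build k A 'Hom(A, A2) *:%R Phi Phi_lin.

Lemma dimA : \dim {: A} = #|gT|.
Proof. by rewrite dimvf /dim /= muln1. Qed.


Lemma sum_ind (F : gT -> k^o) g : \sum_w (w == g)%:R * F w = F g.
Proof.
rewrite (bigD1 g) //= eqxx mul1r big1 ?addr0 // => w /negbTE ->.
by rewrite mul0r.
Qed.

Lemma gmul1r (a : A) : gmul (gone k gT) a = a.
Proof.
apply/ffunP=> g; rewrite ffunE.
rewrite (eq_bigr (fun h => (h == 1%g)%:R * a (h^-1 * g)%g)); last by move=> h _; rewrite ffunE.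
by rewrite sum_ind invg1 mul1g.
Qed.

Lemma gmulr1 (a : A) : gmul a (gone k gT) = a.
Proof.
apply/ffunP=> g; rewrite ffunE.
rewrite (eq_bigr (fun h => (h == g)%:R * a h)); first by rewrite sum_ind.
move=> h _; rewrite ffunE mulrC; congr (_ * _).
by rewrite -(inj_eq (mulgI h)) mulgA mulgV mul1g mulg1 eq_sym.
Qed.

Lemma Df_nf f : nearly_frobenius (linfun (Df f)).
Proof.
move=> a b; rewrite !lfunE /=; split; apply/ffunP=> -[x y]; rewrite !ffunE /=.
- rewrite (eq_bigr (fun z => \sum_h a h * b (h^-1 * z)%g * f (y * z^-1 * x)%g));
    last by move=> z _; rewrite ffunE mulr_suml.
  rewrite exchange_big /=; apply: eq_bigr => h _; rewrite ffunE big_distrr /=.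
  rewrite (reindex_inj (mulgI h)) /=; apply: eq_bigr => z _.
  by rewrite mulgA mulVg mul1g invMg !mulgA mulrA.
- rewrite (eq_bigr (fun z => \sum_h a h * b (h^-1 * z)%g * f (y * z^-1 * x)%g));
    last by move=> z _; rewrite ffunE mulr_suml.
  rewrite exchange_big /=.
  rewrite [RHS](eq_bigr (fun u => \sum_z a z * f (u * z^-1 * x)%g * b (u^-1 * y)%g));
    last by move=> u _; rewrite ffunE mulr_suml.
  rewrite [RHS]exchange_big /=; apply: eq_bigr => h _.
  rewrite (reindex_inj (mulgI h)) /=.
  have inj : injective (fun v : gT => y * v^-1)%g.
    by move=> u v /mulgI /invg_inj.
  rewrite [RHS](reindex_inj inj) /=; apply: eq_bigr => z _.
  rewrite mulKg !invMg invgK mulgKV !mulgA.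
  by rewrite -!mulrA [b z * _]mulrC.
Qed.


Lemma nf_Df D : nearly_frobenius D ->
  D = linfun (Df [ffun y : gT => D (gone k gT) (1%g, y)]).
Proof.
move=> nfD.
set t := D (gone k gT).
have L a : D a = lact a t by rewrite -{1}(gmulr1 a); case: (nfD a (gone k gT)).
have R a : D a = Defs.ract t a by rewrite -{1}(gmul1r a); case: (nfD (gone k gT) a).
have T g x y : t (g^-1 * x, y)%g = t (x, y * g^-1)%g.
  have := congr1 (fun F : A2 => F (x, y)) (etrans (esym (L (gbasis k g))) (R (gbasis k g))).
  rewrite !ffunE /=.
  rewrite (eq_bigr (fun w => (w == g)%:R * t (w^-1 * x, y)%g)); last by move=> w _; rewrite ffunE.
  rewrite sum_ind => ->.
  rewrite (eq_bigr (fun u : gT => (u == y * g^-1)%g%:R * t (x, u))) ?sum_ind //.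
  move=> u _; rewrite ffunE mulrC; congr (_%:R * _). congr (nat_of_bool _); apply/eqP/eqP; [move=> <- | move=> ->].
    by rewrite invMg invgK mulKVg.
  by rewrite invMg invgK mulgKV.
have Tf x y : t (x, y) = t (1, y * x)%g.
  by have := T x x (y * x)%g; rewrite mulVg mulgK.
apply/lfunP => a; rewrite lfunE /= L; apply/ffunP => -[x y]; rewrite !ffunE /=.
by apply: eq_bigr => z _; rewrite Tf ffunE mulgA.
Qed.

Lemma Phi_inj : injective Phi.
Proof.
move=> f g eq; apply/ffunP=> y.
have := congr1 (fun F : 'Hom(A, A2) => F (gone k gT) (1%g, y)) eq.
rewrite /Phi !lfunE /= !ffunE /=.
rewrite (eq_bigr (fun z => (z == 1%g)%:R * f (y * z^-1 * 1)%g)); last by move=> z _; rewrite ffunE.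
rewrite [in X in _ = X](eq_bigr (fun z => (z == 1%g)%:R * g (y * z^-1 * 1)%g)); last by move=> z _; rewrite ffunE.
by rewrite !sum_ind invg1 !mulg1.
Qed.

End S.

Theorem corollary11 (k : fieldType) (gT : finGroupType) (p : nat)
    (Gi : 'I_p -> {group gT}) :
  abelian [set: gT] ->
  (forall i, cyclic (Gi i)) ->
  \big[dprod/1%g]_(i < p) (Gi i) = [set: gT] ->
  Frobdim_is k gT (\prod_(i < p) #|Gi i|)%N.
Proof.
move=> _ _ defG; rewrite (bigdprod_card defG) cardsT.
exists (limg (linfun (@Phi k gT))); split.
  move=> D; split.
    by case/memv_imgP=> f _ ->; rewrite lfunE /=; apply: Df_nf.
  move/nf_Df=> ->; apply/memv_imgP; eexists; first exact: memvf.
  by rewrite lfunE.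
rewrite limg_dim_eq ?dimA //.
have /eqP -> : lker (linfun (@Phi k gT)) == 0%VS.
  by apply/lker0P=> f g; rewrite !lfunE; apply: Phi_inj.
by rewrite capv0.
Qed.
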